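(* Let $G(\pi_i,\pi_i')=\frac12\|\pi_i-\pi_i'\|^2$ and $\mu>0$. Assume $\sqrt{\sum_{i=1}^N\|\nabla_{\pi_i}v_i(\pi)\|^2}\le\zeta$ for all $\pi\in\mathcal X$. Then for any $\sigma,\sigma'\in\mathcal X$, $$\|\pi^{\mu,\sigma}-\sigma\|^2\le\|\sigma-\sigma'\|^2+\frac{2\zeta}{\mu}\|\pi^{\mu,\sigma'}-\sigma\|.$$ (In the paper this is applied with $\sigma=\sigma^k$, $\sigma'=\sigma^{k-1}$.)
   Context: Game. Let $N\ge1$. For each $i\in[N]$, $\mathcal X_i\subseteq\mathbb R^{d_i}$ is a nonempty compact convex set, and $\mathcal X=\prod_i\mathcal X_i$. Each $v_i:\mathcal X\to\mathbb R$ is differentiable, with block gradient $\nabla_{\pi_i}v_i$. The norm is Euclidean, with $\|\pi\|^2=\sum_i\|\pi_i\|^2$. The game is monotone: $\sum_i\langle\nabla_{\pi_i}v_i(\pi)-\nabla_{\pi_i}v_i(\pi'),\pi_i-\pi_i'\rangle\le0$ for all $\pi,\pi'$. Perturbed equilibrium. For $\mu>0$ and $\sigma\in\mathcal X$, $\pi^{\mu,\sigma}$ is the (unique) profile with $\pi_i^{\mu,\sigma}\in\arg\max_{\pi_i\in\mathcal X_i}\{v_i(\pi_i,\pi^{\mu,\sigma}_{-i})-\mu G(\pi_i,\sigma_i)\}$ for all $i$. *)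

(* Defs.v *)
From HB Require Import structures.
From mathcomp Require Import all_boot all_order all_algebra.
From mathcomp Require Import all_classical all_reals all_analysis.
Set Implicit Arguments. Unset Strict Implicit. Unset Printing Implicit Defensive.
Import Order.TTheory GRing.Theory Num.Theory.
Import numFieldNormedType.Exports.
Local Open Scope classical_set_scope.
Local Open Scope ring_scope.

Section Game.
Variables (R : realType) (N : nat) (d : 'I_N -> nat).

Definition profile := forall i : 'I_N, 'rV[R]_(d i).

Definition vdot n (x y : 'rV[R]_n) : R := \sum_(j < n) x 0 j * y 0 j.
Definition vnorm2 n (x : 'rV[R]_n) : R := vdot x x.
Definition vnorm n (x : 'rV[R]_n) : R := Num.sqrt (vnorm2 x).

Definition psub (p q : profile) : profile := fun i => p i - q i.
Definition pdot (p q : profile) : R := \sum_(i < N) vdot (p i) (q i).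
Definition pnorm2 (p : profile) : R := pdot p p.
Definition pnorm (p : profile) : R := Num.sqrt (pnorm2 p).

Definition in_prod (X : forall i : 'I_N, set 'rV[R]_(d i)) (p : profile) : Prop :=
  forall i, X i (p i).

Definition deviate (p : profile) (i : 'I_N) (x : 'rV[R]_(d i)) : profile :=
  @dfwith _ (fun j : 'I_N => 'rV[R]_(d j)) p i x.

End Game.

Definition convex_set_rV (R : realType) n (S : set 'rV[R]_n) : Prop :=
  forall x y, S x -> S y -> forall t : R, 0 <= t <= 1 ->
    S (t *: x + (1 - t) *: y).

Definition differentiable_on_with_grad (R : realType) N (d : 'I_N -> nat)
    (X : forall i : 'I_N, set 'rV[R]_(d i))
    (v : profile R d -> R) (Dv : profile R d -> profile R d) : Prop :=
  forall p, in_prod X p ->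
    forall eps : R, 0 < eps -> exists delta : R, 0 < delta /\
      forall q, in_prod X q -> pnorm (psub q p) < delta ->
        `|v q - v p - pdot (Dv p) (psub q p)| <= eps * pnorm (psub q p).

Definition Gsq (R : realType) n (x y : 'rV[R]_n) : R := 2^-1 * vnorm2 (x - y).

Definition perturbed_eq (R : realType) N (d : 'I_N -> nat)
    (X : forall i : 'I_N, set 'rV[R]_(d i))
    (v : 'I_N -> profile R d -> R) (mu : R) (sigma pi : profile R d) : Prop :=
  in_prod X pi /\
  forall i (x : 'rV[R]_(d i)), X i x ->
    v i (deviate pi x) - mu * Gsq x (sigma i) <= v i pi - mu * Gsq (pi i) (sigma i).

(* Main.v *)
Require Import Defs.
From HB Require Import structures.
From mathcomp Require Import all_boot all_order all_algebra.
From mathcomp Require Import all_classical all_reals all_analysis.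
From mathcomp Require Import ring lra.
Import Order.TTheory GRing.Theory Num.Theory.
Import numFieldNormedType.Exports.
Local Open Scope classical_set_scope.
Local Open Scope ring_scope.

Set Implicit Arguments. Unset Strict Implicit.
Section L.
Variable R : realType.

Lemma vdotC n (x y : 'rV[R]_n) : vdot x y = vdot y x.
Proof. by apply: eq_bigr => j _; rewrite mulrC. Qed.
Lemma vdotDl n (x y z : 'rV[R]_n) : vdot (x + y) z = vdot x z + vdot y z.
Proof. by rewrite /vdot -big_split; apply: eq_bigr => j _; rewrite mxE mulrDl. Qed.
Lemma vdotNl n (x z : 'rV[R]_n) : vdot (- x) z = - vdot x z.
Proof. by rewrite /vdot -sumrN; apply: eq_bigr => j _; rewrite mxE mulNr. Qed.
Lemma vdotBl n (x y z : 'rV[R]_n) : vdot (x - y) z = vdot x z - vdot y z.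
Proof. by rewrite vdotDl vdotNl. Qed.
Lemma vdotZl n a (x z : 'rV[R]_n) : vdot (a *: x) z = a * vdot x z.
Proof. by rewrite /vdot mulr_sumr; apply: eq_bigr => j _; rewrite mxE mulrA. Qed.
Lemma vdotDr n (x y z : 'rV[R]_n) : vdot z (x + y) = vdot z x + vdot z y.
Proof. by rewrite vdotC vdotDl !(vdotC z). Qed.
Lemma vdotBr n (x y z : 'rV[R]_n) : vdot z (x - y) = vdot z x - vdot z y.
Proof. by rewrite vdotC vdotBl !(vdotC z). Qed.
Lemma vdotZr n a (x z : 'rV[R]_n) : vdot z (a *: x) = a * vdot z x.
Proof. by rewrite vdotC vdotZl vdotC. Qed.
Lemma vdot0r n (x : 'rV[R]_n) : vdot x 0 = 0.
Proof. by rewrite /vdot big1 // => j _; rewrite mxE mulr0. Qed.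
Lemma vnorm2_ge0 n (x : 'rV[R]_n) : 0 <= vnorm2 x.
Proof. by apply: sumr_ge0 => j _; rewrite -expr2 sqr_ge0. Qed.

Lemma vnorm2_addZ n (a b : 'rV[R]_n) t :
  vnorm2 (a + t *: b) = vnorm2 a + 2 * t * vdot a b + t ^+ 2 * vnorm2 b.
Proof.
rewrite /vnorm2 vdotDl !vdotDr !vdotZl !vdotZr (vdotC b a); ring.
Qed.

Variables (N : nat) (d : 'I_N -> nat).
Implicit Types p q r : profile R d.

Lemma pdotC p q : pdot p q = pdot q p.
Proof. by apply: eq_bigr => i _; rewrite vdotC. Qed.
Lemma pdotBl p q r : pdot (psub p q) r = pdot p r - pdot q r.
Proof. by rewrite /pdot -sumrB; apply: eq_bigr => i _; rewrite vdotBl. Qed.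
Lemma pdotBr p q r : pdot r (psub p q) = pdot r p - pdot r q.
Proof. by rewrite pdotC pdotBl ?(pdotC r). Qed.
Lemma pnorm2_ge0 p : 0 <= pnorm2 p.
Proof. by apply: sumr_ge0 => i _; apply: vnorm2_ge0. Qed.

Definition pcomb p q (t : R) : profile R d := fun i => p i - t *: q i.

Lemma pnorm2_comb p q t :
  pnorm2 (pcomb p q t) = pnorm2 p - 2 * t * pdot p q + t ^+ 2 * pnorm2 q.
Proof.
rewrite /pnorm2 /pdot mulr_sumr mulr_sumr -sumrB -big_split /=.
apply: eq_bigr => i _; rewrite /pcomb !vdotBl !vdotBr !vdotZl !vdotZr (vdotC (q i)).
rewrite /vnorm2; ring.
Qed.

Lemma pdot_CS p q : pdot p q <= Num.sqrt (pnorm2 p) * Num.sqrt (pnorm2 q).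
Proof.
set X := pnorm2 p; set Y := pnorm2 q; set S := pdot p q.
have HX : 0 <= X by apply: pnorm2_ge0.
have HY : 0 <= Y by apply: pnorm2_ge0.
have key : S ^+ 2 <= X * Y.
  have [Y0|Yp] := eqVneq Y 0.
    have S0 : S = 0.
      apply/eqP; apply/negPn/negP => Sn.
      have := pnorm2_ge0 (pcomb p q ((X + 1) / (2 * S))).
      rewrite pnorm2_comb -/X -/Y -/S Y0.
      have -> : 2 * ((X + 1) / (2 * S)) * S = X + 1 by field; rewrite Sn.
      lra.
    by rewrite S0 Y0; lra.
  have Ypos : 0 < Y by rewrite lt_neqAle eq_sym Yp HY.
  have := pnorm2_ge0 (pcomb p q (S / Y)).
  rewrite pnorm2_comb -/X -/Y -/S.
  have -> : X - 2 * (S / Y) * S + (S / Y) ^+ 2 * Y = (X * Y - S ^+ 2) / Y.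
    by field; rewrite gt_eqF.
  by rewrite ler_pdivlMr // mul0r subr_ge0.
have hx := sqr_sqrtr HX; have hy := sqr_sqrtr HY.
have ha := sqrtr_ge0 X; have hb := sqrtr_ge0 Y.
set a := Num.sqrt X in hx ha *; set b := Num.sqrt Y in hy hb *.
move: key; rewrite -hx -hy => key.
have hab : 0 <= a * b by apply: mulr_ge0.
have [hS|hS] := lerP S 0; first lra.
have h1 : (S - a * b) * (S + a * b) <= 0.
  rewrite (_ : (S - a * b) * (S + a * b) = S ^+ 2 - a ^+ 2 * b ^+ 2); last by ring.
  by rewrite subr_le0.
have hp : 0 < S + a * b by lra.
by move: h1; rewrite pmulr_lle0 // subr_le0.
Qed.

Lemma foc_block (X : forall i : 'I_N, set 'rV[R]_(d i)) (v : 'I_N -> profile R d -> R)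
  (D : profile R d -> profile R d) (mu : R) (sigma pi : profile R d) (i : 'I_N)
  (x : 'rV[R]_(d i)) :
  convex_set_rV (X i) -> differentiable_on_with_grad X (v i) D ->
  perturbed_eq X v mu sigma pi -> X i x -> 0 < mu ->
  vdot (D pi i) (x - pi i) - mu * vdot (pi i - sigma i) (x - pi i) <= 0.
Proof.
move=> Hc Hd [Hpi Hpe] Hx Hmu.
set h := x - pi i; set g := D pi i; set w := pi i - sigma i.
set A := vdot g h - mu * vdot w h.
have [//|HA] := lerP A 0.
exfalso.
set e := A / 2.
have he : 0 < e by rewrite /e; lra.
set n := vnorm h.
have hn : 0 <= n by apply: sqrtr_ge0.
have hn2 : n ^+ 2 = vnorm2 h by rewrite sqr_sqrtr // vnorm2_ge0.
set eps := e / (2 * (n + 1)).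
have hn1 : 0 < 2 * (n + 1) by lra.
have heps : 0 < eps by rewrite divr_gt0.
have [del [hdel Hdl]] := Hd pi Hpi eps heps.
have hm : 0 < mu * (n ^+ 2 + 1) by rewrite mulr_gt0 //; have := sqr_ge0 n; lra.
set t := Num.min 1 (Num.min (del / (2 * (n + 1))) (e / (mu * (n ^+ 2 + 1)))).
have ht0 : 0 < t by rewrite !lt_min ltr01 !divr_gt0.
have ht1 : t <= 1 by rewrite /t ge_min lexx.
have ht2 : t <= del / (2 * (n + 1)) by rewrite /t !ge_min lexx orbT.
have ht3 : t <= e / (mu * (n ^+ 2 + 1)) by rewrite /t !ge_min lexx !orbT.
set y := t *: x + (1 - t) *: pi i.
have hy : X i y by apply: Hc => //; rewrite ht1 ltW.
have ey : y - pi i = t *: h by apply/matrixP => a b; rewrite !mxE; ring.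
have ey2 : y - sigma i = w + t *: h by apply/matrixP => a b; rewrite !mxE; ring.
set q := deviate pi y.
have hqi : q i = y by exact: dfwith_in.
have hqj : forall j, j != i -> q j = pi j.
  by move=> j nj; apply: dfwith_out; rewrite eq_sym.
have hq : in_prod X q.
  move=> j; case: (eqVneq j i) => [->|nj]; first by rewrite hqi.
  by rewrite hqj.
have hpd : pdot (D pi) (psub q pi) = t * vdot g h.
  rewrite /pdot (bigD1 i) //= big1 ?addr0 => [|j nj].
    by rewrite /psub hqi ey vdotZr.
  by rewrite /psub hqj // subrr vdot0r.
have hpn2 : pnorm2 (psub q pi) = (t * n) ^+ 2.
  rewrite /pnorm2 /pdot (bigD1 i) //= big1 ?addr0 => [|j nj].
    by rewrite /psub hqi ey vdotZr vdotZl exprMn hn2 /vnorm2; ring.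
  by rewrite /psub hqj // subrr vdot0r.
have hpn : pnorm (psub q pi) = t * n.
  by rewrite /pnorm hpn2 sqrtr_sqr ger0_norm // mulr_ge0 // ltW.
have hlt : pnorm (psub q pi) < del.
  rewrite hpn; move: ht2; rewrite ler_pdivlMr // => ht2.
  have : t * n < t * (2 * (n + 1)) by rewrite ltr_pM2l //; lra.
  lra.
have := Hdl q hq hlt; rewrite hpd hpn ler_norml => /andP[h1 _].
have := Hpe i y hy; rewrite -/q /Gsq ey2 -/w.
rewrite vnorm2_addZ -hn2 => h2.
have h3 : t * A <= t * (eps * n + mu * t * n ^+ 2 / 2).
  rewrite /A; nra.
move: h3; rewrite ler_pM2l // => h3.
have F1 : eps * n <= e / 2.
  have : eps * (2 * (n + 1)) = e by rewrite /eps; field; lra.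
  nra.
have F2 : mu * t * n ^+ 2 <= e.
  move: ht3; rewrite ler_pdivlMr // => ht3.
  nra.
rewrite /e in F1 F2; lra.
Qed.

Lemma foc (X : forall i : 'I_N, set 'rV[R]_(d i)) (v : 'I_N -> profile R d -> R)
  (Dv : 'I_N -> profile R d -> profile R d) (mu : R) (sigma pi x : profile R d) :
  (forall i, convex_set_rV (X i)) ->
  (forall i, differentiable_on_with_grad X (v i) (Dv i)) ->
  perturbed_eq X v mu sigma pi -> in_prod X x -> 0 < mu ->
  pdot (fun i => Dv i pi i) (psub x pi) - mu * pdot (psub pi sigma) (psub x pi) <= 0.
Proof.
move=> Hc Hd Hpe Hx Hmu.
rewrite /pdot mulr_sumr -sumrB; apply: sumr_le0 => i _.
exact: (foc_block (Hc i) (Hd i) Hpe (Hx i) Hmu).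
Qed.
End L.

Theorem lemma14 (R : realType) (N : nat) (d : 'I_N -> nat)
  (X : forall i : 'I_N, set 'rV[R]_(d i))
  (v : 'I_N -> profile R d -> R)
  (Dv : 'I_N -> profile R d -> profile R d)
  (mu zeta : R) (sigma sigma' pi pi' : profile R d) :
  (0 < N)%N ->
  (forall i, X i !=set0) ->
  (forall i, compact (X i)) ->
  (forall i, convex_set_rV (X i)) ->
  (forall i, differentiable_on_with_grad X (v i) (Dv i)) ->
  (* monotonicity, with block gradients grad_{pi_i} v_i = (Dv i pi) i *)
  (forall p q, in_prod X p -> in_prod X q ->
     \sum_(i < N) vdot (Dv i p i - Dv i q i) (p i - q i) <= 0) ->
  (* gradient bound *)
  (forall p, in_prod X p ->
     Num.sqrt (\sum_(i < N) vnorm2 (Dv i p i)) <= zeta) ->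
  0 < mu ->
  in_prod X sigma -> in_prod X sigma' ->
  perturbed_eq X v mu sigma pi ->
  perturbed_eq X v mu sigma' pi' ->
  pnorm2 (psub pi sigma) <=
    pnorm2 (psub sigma sigma') + 2 * zeta / mu * pnorm (psub pi' sigma).
Proof.
move=> _ _ _ Hc Hd Hmon Hg Hmu Hs Hs' Hpe Hpe'.
have Hpi := Hpe.1; have Hpi' := Hpe'.1.
set G := fun i => Dv i pi i; set G' := fun i => Dv i pi' i.
have F1 := foc Hc Hd Hpe Hpi' Hmu.
have F2 := foc Hc Hd Hpe' Hpi Hmu.
have F3 := foc Hc Hd Hpe' Hs Hmu.
have M : pdot (psub G G') (psub pi pi') <= 0 by exact: Hmon.
have CS : pdot G' (psub pi' sigma) <= zeta * pnorm (psub pi' sigma).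
  apply: le_trans (pdot_CS _ _) _; rewrite /pnorm ler_wpM2r ?sqrtr_ge0 //.
  exact: Hg.
have NN := pnorm2_ge0 (psub (psub pi' sigma') (psub pi pi')).
have hb := sqrtr_ge0 (pnorm2 (psub pi' sigma)).
rewrite -/(pnorm _) in hb.
set nb := pnorm (psub pi' sigma) in CS hb *.
have K1 : pnorm2 (psub pi pi') - pdot (psub sigma sigma') (psub pi pi') <= 0.
  have : mu * (pnorm2 (psub pi pi') - pdot (psub sigma sigma') (psub pi pi')) <= 0.
    move: F1 F2 M; rewrite /pnorm2 !pdotBl !pdotBr ?pdotBl ?pdotBr.
    rewrite ?(pdotC pi' pi) ?(pdotC sigma pi) ?(pdotC sigma' pi) ?(pdotC sigma pi') ?(pdotC sigma' pi') ?(pdotC sigma' sigma).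
    rewrite ?(pdotC G' G) ?(pdotC pi G) ?(pdotC pi' G) ?(pdotC pi G') ?(pdotC pi' G').
    nra.
  by rewrite pmulr_rle0.
have K2 : (pnorm2 (psub pi' sigma) + pdot (psub sigma sigma') (psub pi' sigma)) * mu
          <= zeta * nb.
  apply: le_trans CS; move: F3.
  rewrite /pnorm2 !pdotBl !pdotBr ?pdotBl ?pdotBr.
  rewrite ?(pdotC pi' pi) ?(pdotC sigma pi) ?(pdotC sigma' pi) ?(pdotC sigma pi') ?(pdotC sigma' pi') ?(pdotC sigma' sigma).
  rewrite ?(pdotC pi' G') ?(pdotC sigma G').
  nra.
rewrite -ler_pdivlMr // in K2.
have -> : 2 * zeta / mu * nb = 2 * (zeta * nb / mu) by rewrite mulrAC -!mulrA.
move: K1 K2 NN; rewrite /pnorm2 !pdotBl !pdotBr ?pdotBl ?pdotBr.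
rewrite ?(pdotC pi' pi) ?(pdotC sigma pi) ?(pdotC sigma' pi) ?(pdotC sigma pi') ?(pdotC sigma' pi') ?(pdotC sigma' sigma).
lra.
Qed.
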